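(* Let $S_S=S_C=\{0\}$, let $d\in(0,\frac12)$, and let $G_0=(V_0,E_0)$ be a seed geometric graph such that some vertex $u\in V_0$ is isolated ($\deg(u)=0$). Then for every dynamic graph $(G_t=(V_t,E_t))_{t\geq0}$ generated by D3G3 from $G_0$ with these parameters, $n_t=|V_t|\leq\frac{8}{\pi d^2}$ for all $t>0$.
   Context: Let $\mathbb{T}=[0,1)^2$ be the unit torus with toroidal Euclidean distance $\mathrm{dist}$; a geometric graph with threshold $d$ on a finite point set $V\subset\mathbb{T}$ has edges $\{u,v\}$, $u\neq v$, with $\mathrm{dist}(u,v)\leq d$. D3G3 takes $d$, sets $S_S,S_C\subseteq\mathbb{N}$ and a non-null seed geometric graph $G_0$. From $G_t=(V_t,E_t)$, $G_{t+1}$ is obtained by applying simultaneously to each $v\in V_t$ (with $\deg(v)$ its degree in $G_t$): $v\in V_{t+1}$ (same position) iff $\deg(v)\in S_S$; if $\deg(v)\in S_C$, a new vertex (distinct from all previous ones) is added to $V_{t+1}$ at a uniformly random position in $\mathbb{T}$. No other vertices are in $V_{t+1}$; $E_{t+1}$ is given by the geometric rule. *)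

(* Defs.v *)
From Stdlib Require Import Reals List Permutation Arith.
Import ListNotations.
Open Scope R_scope.

Definition point := (R * R)%type.
Definition in_torus (p : point) : Prop :=
  0 <= fst p < 1 /\ 0 <= snd p < 1.

Definition tdist1 (a b : R) : R := Rmin (Rabs (a - b)) (1 - Rabs (a - b)).
Definition tdist (p q : point) : R :=
  sqrt (tdist1 (fst p) (fst q) ^ 2 + tdist1 (snd p) (snd q) ^ 2).

(* A geometric graph is represented by its finite list of vertices (each list
   entry is a distinct vertex, given by its position); edges are determined by
   the threshold d: {u,v}, u <> v, is an edge iff tdist u v <= d. *)
Definition adjb (d : R) (p q : point) : bool :=
  if Rle_dec (tdist p q) d then true else false.

Definition vtx (V : list point) (i : nat) : point := nth i V (0, 0).

Definition degree (d : R) (V : list point) (i : nat) : nat :=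
  length (filter (fun j => andb (negb (Nat.eqb i j)) (adjb d (vtx V i) (vtx V j)))
                 (seq 0 (length V))).

(* one D3G3 step with parameters d, S_S, S_C (sets of naturals as boolean
   predicates): survivors keep their position; each vertex whose degree is in
   S_C creates one new vertex at an (arbitrary realization of a uniformly
   random) position in the torus. *)
Definition D3G3_step (d : R) (SS SC : nat -> bool) (V V' : list point) : Prop :=
  exists news : list point,
    Forall in_torus news /\
    length news = length (filter (fun i => SC (degree d V i)) (seq 0 (length V))) /\
    Permutation V'
      (map (vtx V) (filter (fun i => SS (degree d V i)) (seq 0 (length V))) ++ news).

Definition seed_graph (V : list point) : Prop :=
  V <> [] /\ Forall in_torus V.

Definition D3G3_run (d : R) (SS SC : nat -> bool) (G : nat -> list point) : Prop :=
  seed_graph (G 0%nat) /\ forall t : nat, D3G3_step d SS SC (G t) (G (S t)).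

Definition S0 (n : nat) : bool := Nat.eqb n 0.

(* Main.v *)
Require Import Defs.
From Stdlib Require Import Reals List Permutation Arith Lra Lia ZArith.
Import ListNotations.
Open Scope R_scope.


Fixpoint sumN (f : nat -> R) (n : nat) : R :=
  match n with O => 0 | S n => sumN f n + f n end.

Lemma sumN_ext f g n : (forall k, (k < n)%nat -> f k = g k) -> sumN f n = sumN g n.
Proof. induction n; simpl; intros H; auto. rewrite IHn by (intros; apply H; lia). rewrite H by lia. auto. Qed.

Lemma sumN_le f g n : (forall k, (k < n)%nat -> f k <= g k) -> sumN f n <= sumN g n.
Proof. induction n; simpl; intros H. lra. assert (f n <= g n) by (apply H; lia).
  assert (sumN f n <= sumN g n) by (apply IHn; intros; apply H; lia). lra. Qed.

Lemma sumN_nonneg f n : (forall k, (k < n)%nat -> 0 <= f k) -> 0 <= sumN f n.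
Proof. intros H. replace 0 with (sumN (fun _ => 0) n). apply sumN_le; auto.
  induction n; simpl; auto. rewrite IHn; [lra|]. intros; apply H; lia. Qed.

Lemma sumN_plus f g n : sumN (fun k => f k + g k) n = sumN f n + sumN g n.
Proof. induction n; simpl; lra. Qed.

Lemma sumN_scal c f n : sumN (fun k => c * f k) n = c * sumN f n.
Proof. induction n; simpl; [lra|]. rewrite IHn; lra. Qed.

Lemma sumN_const c n : sumN (fun _ => c) n = INR n * c.
Proof. induction n; simpl sumN; [simpl; lra|]. rewrite IHn, S_INR; lra. Qed.

Lemma sumN_split f M n : sumN f (M + n) = sumN f M + sumN (fun m => f (M + m)%nat) n.
Proof. induction n; simpl. rewrite Nat.add_0_r; lra. rewrite Nat.add_succ_r; simpl. rewrite IHn; lra. Qed.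

Lemma sumN_shift f n : sumN f (S n) = f 0%nat + sumN (fun m => f (S m)) n.
Proof. induction n. simpl; lra. simpl sumN. simpl sumN in IHn. rewrite IHn. lra. Qed.

Lemma sumN_rev f n : sumN f n = sumN (fun m => f (n - 1 - m)%nat) n.
Proof. induction n. reflexivity.
  rewrite (sumN_shift (fun m => f (S n - 1 - m)%nat)). simpl sumN at 1. rewrite IHn.
  replace (S n - 1 - 0)%nat with n by lia.
  rewrite (sumN_ext _ (fun m => f (S n - 1 - S m)%nat)). lra.
  intros k Hk. f_equal. lia. Qed.

Lemma sumN_3 h N : sumN (fun j => h j + h (j + N)%nat + h (j + 2 * N)%nat) N = sumN h (3 * N).
Proof. rewrite !sumN_plus. replace (3 * N)%nat with (N + N + N)%nat by lia.
  rewrite !sumN_split. rewrite (sumN_ext (fun j => h (j+N)%nat) (fun m => h (N+m)%nat)) by (intros; f_equal; lia).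
  rewrite (sumN_ext (fun j => h (j+2*N)%nat) (fun m => h (N+N+m)%nat)) by (intros; f_equal; lia). lra. Qed.

Lemma sumN_ge_tail f M n : (forall k, (k < M)%nat -> 0 <= f k) ->
  sumN (fun m => f (M + m)%nat) n <= sumN f (M + n).
Proof. intros H. rewrite sumN_split. assert (0 <= sumN f M) by (apply sumN_nonneg; auto). lra. Qed.

Lemma sumN_ge_head f M n : (forall k, (M <= k)%nat -> 0 <= f k) ->
  sumN f M <= sumN f (M + n).
Proof. intros H. rewrite sumN_split. assert (0 <= sumN (fun m => f (M+m)%nat) n) by (apply sumN_nonneg; intros; apply H; lia). lra. Qed.


Definition Fhyp (F : R -> R) (rho : R) : Prop :=
  (forall x y, 0 <= x <= y -> F y <= F x) /\ (forall x, 0 <= x -> 0 <= F x) /\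
  (forall x, rho <= x -> F x = 0).

Lemma tdist1_le x a : 0 <= x < 1 -> 0 <= a < 1 ->
  tdist1 x a <= Rabs (x - a) /\ tdist1 x a <= Rabs (x - 1 - a) /\ tdist1 x a <= Rabs (x + 1 - a).
Proof. intros Hx Ha. unfold tdist1, Rmin. destruct (Rle_dec _ _);
  unfold Rabs in *; repeat destruct (Rcase_abs _); lra. Qed.

Lemma tdist1_nonneg x a : 0 <= x < 1 -> 0 <= a < 1 -> 0 <= tdist1 x a.
Proof. intros Hx Ha. unfold tdist1, Rmin. destruct (Rle_dec _ _);
  unfold Rabs in *; repeat destruct (Rcase_abs _); lra. Qed.

Lemma Rdiv_le_0_compat a b : 0 <= a -> 0 < b -> 0 <= a / b.
Proof. intros. unfold Rdiv. apply Rmult_le_pos; auto. left; apply Rinv_0_lt_compat; auto. Qed.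

Lemma INR_div_range j N : (j < N)%nat -> 0 <= INR j / INR N < 1.
Proof. intros H. assert (0 < INR N) by (apply lt_0_INR; lia).
  assert (INR j < INR N) by (apply lt_INR; auto). assert (0 <= INR j) by apply pos_INR.
  split. apply Rdiv_le_0_compat; lra. apply (Rmult_lt_reg_r (INR N)); auto.
  unfold Rdiv; rewrite Rmult_assoc, Rinv_l by lra. lra. Qed.

Lemma window F rho a N : 0 <= a < 1 -> 0 < rho -> 2 * rho <= 1 -> Fhyp F rho -> (0 < N)%nat ->
  sumN (fun k => F (Rabs (INR k / INR N - 1 - a))) (3 * N) <=
  sumN (fun j => F (tdist1 (INR j / INR N) a)) N.
Proof.
  intros Ha Hr Hr2 [Hm [Hp Hz]] HN.
  rewrite <- sumN_3. apply sumN_le. intros j Hj.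
  assert (HNp : 0 < INR N) by (apply lt_0_INR; lia).
  set (x := INR j / INR N).
  assert (Hx : 0 <= x < 1) by (apply INR_div_range; auto).
  assert (E1 : INR (j + N) / INR N = x + 1) by (unfold x; rewrite plus_INR; field; lra).
  assert (E2 : INR (j + 2 * N) / INR N = x + 2) by (unfold x; rewrite plus_INR, mult_INR; simpl; field; lra).
  rewrite E1, E2. replace (x + 1 - 1 - a) with (x - a) by ring.
  replace (x + 2 - 1 - a) with (x + 1 - a) by ring.
  destruct (tdist1_le x a Hx Ha) as [L1 [L2 L3]].
  pose proof (tdist1_nonneg x a Hx Ha) as L0.
  assert (M1 := Hm _ _ (conj L0 L1)). assert (M2 := Hm _ _ (conj L0 L2)). assert (M3 := Hm _ _ (conj L0 L3)).
  destruct (Rlt_dec (Rabs (x - 1 - a)) rho).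
  - rewrite (Hz (Rabs (x - a))), (Hz (Rabs (x + 1 - a))); [lra| |];
    unfold Rabs in *; repeat destruct (Rcase_abs _); lra.
  - rewrite (Hz (Rabs (x - 1 - a))) by lra.
    destruct (Rlt_dec (Rabs (x - a)) rho).
    + rewrite (Hz (Rabs (x + 1 - a))); [lra|]. unfold Rabs in *; repeat destruct (Rcase_abs _); lra.
    + rewrite (Hz (Rabs (x - a))) by lra. lra.
Qed.

Lemma tele F Phi N t n : (forall s h, 0 <= s -> 0 <= h -> Phi (s + h) - Phi s <= h * F s) ->
  0 <= t -> (0 < N)%nat ->
  Phi (t + INR n / INR N) - Phi t <= sumN (fun m => F (t + INR m / INR N)) n / INR N.
Proof.
  intros HP Ht HN. assert (HNp : 0 < INR N) by (apply lt_0_INR; lia).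
  induction n.
  - simpl. replace (t + 0 / INR N) with t by (field; lra). lra.
  - simpl sumN. rewrite S_INR.
    assert (H0 : 0 <= INR n / INR N) by (apply Rdiv_le_0_compat; [apply pos_INR|lra]).
    pose proof (HP (t + INR n / INR N) (/ INR N) ltac:(lra) ltac:(left; apply Rinv_0_lt_compat; lra)) as H1.
    replace (t + INR n / INR N + / INR N) with (t + (INR n + 1) / INR N) in H1 by (field; lra).
    replace ((sumN (fun m => F (t + INR m / INR N)) n + F (t + INR n / INR N)) / INR N)
      with (sumN (fun m => F (t + INR m / INR N)) n / INR N + / INR N * F (t + INR n / INR N)) by (field; lra).
    lra.
Qed.

Lemma one_side F Phi rho N t : Fhyp F rho -> rho <= 1 ->
  (forall s h, 0 <= s -> 0 <= h -> Phi (s + h) - Phi s <= h * F s) ->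
  (forall s, rho <= s -> Phi s = Phi rho) ->
  0 <= t <= / INR N -> (0 < N)%nat ->
  INR N * (Phi rho - Phi 0) - F 0 <= sumN (fun m => F (t + INR m / INR N)) N.
Proof.
  intros [Hm [Hp Hz]] Hr HP Hc Ht HN. assert (HNp : 0 < INR N) by (apply lt_0_INR; lia).
  pose proof (tele F Phi N t N HP ltac:(lra) HN) as H1.
  replace (t + INR N / INR N) with (t + 1) in H1 by (field; lra).
  rewrite (Hc (t+1)) in H1 by lra.
  pose proof (HP 0 t ltac:(lra) ltac:(lra)) as H2. rewrite Rplus_0_l in H2.
  assert (F0 := Hp 0 ltac:(lra)).
  assert (t * F 0 <= / INR N * F 0) by (apply Rmult_le_compat_r; lra).
  assert (Phi rho - Phi 0 - / INR N * F 0 <= sumN (fun m => F (t + INR m / INR N)) N / INR N) by lra.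
  apply (Rmult_le_compat_l (INR N)) in H0; [|lra].
  replace (INR N * (sumN (fun m => F (t + INR m / INR N)) N / INR N)) with (sumN (fun m => F (t + INR m / INR N)) N) in H0 by (field; lra).
  replace (INR N * (Phi rho - Phi 0 - / INR N * F 0)) with (INR N * (Phi rho - Phi 0) - F 0) in H0 by (field; lra).
  lra.
Qed.


Lemma ceil_nat x : 0 <= x -> exists n : nat, x < INR n <= x + 1.
Proof. intros Hx. destruct (archimed x) as [H1 H2].
  assert (Hz : (0 <= up x)%Z). { apply le_IZR. lra. }
  exists (Z.to_nat (up x)). rewrite INR_IZR_INZ, Z2Nat.id by auto. lra. Qed.

Lemma L1D F Phi rho a N : 0 <= a < 1 -> 0 < rho -> 2 * rho <= 1 -> Fhyp F rho ->
  (forall s h, 0 <= s -> 0 <= h -> Phi (s + h) - Phi s <= h * F s) ->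
  (forall s, rho <= s -> Phi s = Phi rho) -> (0 < N)%nat ->
  2 * INR N * (Phi rho - Phi 0) - 2 * F 0 <= sumN (fun j => F (tdist1 (INR j / INR N) a)) N.
Proof.
  intros Ha Hr Hr2 HF HP Hc HN.
  assert (HNp : 0 < INR N) by (apply lt_0_INR; lia).
  eapply Rle_trans; [|apply (window F rho a N); auto].
  destruct HF as [Hm [Hp Hz]].
  set (h := fun k => F (Rabs (INR k / INR N - 1 - a))).
  destruct (ceil_nat (INR N * a)) as [J [HJ1 HJ2]].
  { apply Rmult_le_pos; lra. }
  assert (HJN : (J <= N)%nat). { assert (INR N * a < INR N * 1) by (apply Rmult_lt_compat_l; lra). rewrite Rmult_1_r in H. assert (J < S N)%nat; [apply INR_lt; rewrite S_INR; lra|lia]. }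
  assert (HJ0 : (1 <= J)%nat). { destruct J. { change (INR 0) with 0 in HJ1. assert (0 <= INR N * a) by (apply Rmult_le_pos; lra). lra. } lia. }
  assert (Hh : forall k, 0 <= h k) by (intros; apply Hp; apply Rabs_pos).
  assert (R1 : sumN (fun m => h (J + N + m)%nat) N <= sumN (fun m => h (J + N + m)%nat) (3 * N - (J + N))).
  { replace (3 * N - (J + N))%nat with (N + (N - J))%nat by lia. apply sumN_ge_head. intros; auto. }
  assert (R2 : sumN (fun m => h (J + N + m)%nat) (3 * N - (J + N)) <= sumN h (3 * N) - sumN h (J + N)).
  { replace (3 * N)%nat with ((J + N) + (3 * N - (J + N)))%nat at 2 by lia. rewrite sumN_split. lra. }
  assert (L1 : sumN (fun m => h (J + m)%nat) N <= sumN h (J + N)) by (apply sumN_ge_tail; auto).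
  rewrite sumN_rev in L1.
  set (t0 := INR J / INR N - a). set (t1 := a - (INR J - 1) / INR N).
  assert (E1 : sumN (fun m => h (J + N + m)%nat) N = sumN (fun m => F (t0 + INR m / INR N)) N).
  { apply sumN_ext. intros m Hm'. unfold h. f_equal. rewrite !plus_INR.
    replace ((INR J + INR N + INR m) / INR N - 1 - a) with (t0 + INR m / INR N) by (unfold t0; field; lra).
    apply Rabs_right. assert (0 <= INR m / INR N) by (apply Rdiv_le_0_compat; [apply pos_INR|lra]).
    assert (0 <= t0). { unfold t0. assert (INR N * a <= INR J) by lra.
      apply (Rmult_le_reg_l (INR N)); auto. unfold Rminus. rewrite Rmult_plus_distr_l. unfold Rdiv. 
      replace (INR N * (INR J * / INR N)) with (INR J) by (field; lra). lra. }
    lra. }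
  assert (E2 : sumN (fun m => h (J + (N - 1 - m))%nat) N = sumN (fun m => F (t1 + INR m / INR N)) N).
  { apply sumN_ext. intros m Hm'. unfold h. f_equal.
    replace (INR (J + (N - 1 - m))) with (INR J + INR N - 1 - INR m).
    2:{ rewrite plus_INR, !minus_INR by lia. simpl. lra. }
    replace ((INR J + INR N - 1 - INR m) / INR N - 1 - a) with (- (t1 + INR m / INR N)) by (unfold t1; field; lra).
    rewrite Rabs_Ropp. apply Rabs_right. assert (0 <= INR m / INR N) by (apply Rdiv_le_0_compat; [apply pos_INR|lra]).
    assert (0 <= t1). { unfold t1. 
      apply (Rmult_le_reg_l (INR N)); auto. unfold Rminus. rewrite Rmult_plus_distr_l. unfold Rdiv. 
      replace (INR N * - ((INR J + - (1)) * / INR N)) with (- (INR J - 1)) by (field; lra). lra. }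
    lra. }
  assert (Ht0 : 0 <= t0 <= / INR N).
  { unfold t0. split; apply (Rmult_le_reg_l (INR N)); auto; unfold Rminus; rewrite Rmult_plus_distr_l; unfold Rdiv;
    replace (INR N * (INR J * / INR N)) with (INR J) by (field; lra); try rewrite Rinv_r by lra; lra. }
  assert (Ht1 : 0 <= t1 <= / INR N).
  { unfold t1. split; apply (Rmult_le_reg_l (INR N)); auto; unfold Rminus; rewrite Rmult_plus_distr_l; unfold Rdiv;
    replace (INR N * - ((INR J + - (1)) * / INR N)) with (- (INR J - 1)) by (field; lra); try rewrite Rinv_r by lra; lra. }
  pose proof (one_side F Phi rho N t0 (conj Hm (conj Hp Hz)) ltac:(lra) HP Hc Ht0 HN).
  pose proof (one_side F Phi rho N t1 (conj Hm (conj Hp Hz)) ltac:(lra) HP Hc Ht1 HN).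
  lra.
Qed.

From Coquelicot Require Import Coquelicot.
Open Scope R_scope.

Definition Phi1 (x : R) : R := / 2 * (asin x + x * sqrt (1 - x * x)).

Lemma Phi1_deriv c : -1 < c < 1 -> derivable_pt_lim Phi1 c (sqrt (1 - c * c)).
Proof.
  intros Hc. apply is_derive_Reals.
  assert (Ha : is_derive asin c (1 / sqrt (1 - c²))).
  { apply is_derive_Reals. apply (derive_pt_eq_1 _ _ _ (derivable_pt_asin c Hc)). apply derive_pt_asin. }
  assert (Hpos : 0 < 1 - c * c) by nra.
  assert (Hb : is_derive (fun x => x * sqrt (1 - x * x)) c
      (1 * sqrt (1 - c * c) + c * ((-(1 * c + c * 1)) * / (2 * sqrt (1 - c * c))))).
  { auto_derive. lra. reflexivity. }
  pose proof (is_derive_scal _ _ (/2) _ (is_derive_plus _ _ _ _ _ Ha Hb)) as H.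
  unfold Phi1. 
  replace (sqrt (1 - c * c)) with (/ 2 * plus (1 / sqrt (1 - c²)) (1 * sqrt (1 - c * c) + c * ((-(1 * c + c * 1)) * / (2 * sqrt (1 - c * c))))).
  - exact H.
  - unfold plus; simpl. unfold Rsqr. assert (Hs : 0 < sqrt (1 - c * c)) by (apply sqrt_lt_R0; lra).
    assert (Hss : sqrt (1 - c * c) * sqrt (1 - c * c) = 1 - c * c) by (apply sqrt_sqrt; lra).
    apply (Rmult_eq_reg_r (sqrt (1 - c * c))); [|lra].
    field_simplify; [|lra].
    assert (E : sqrt (1 - c * c) ^ 2 = 1 - c * c) by (simpl; rewrite Rmult_1_r; auto).
    rewrite E. field.
Qed.





Lemma Phi1_inc x y : 0 <= x <= y -> y < 1 -> Phi1 y - Phi1 x <= (y - x) * sqrt (1 - x * x).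
Proof.
  intros Hx Hy. destruct (Req_dec x y) as [<-|Hne]. { rewrite !Rminus_diag, Rmult_0_l. lra. }
  destruct (MVT_cor2 Phi1 (fun c => sqrt (1 - c * c)) x y ltac:(lra)) as [c [Hc1 Hc2]].
  { intros c Hc. apply Phi1_deriv. lra. }
  rewrite Hc1, Rmult_comm. apply Rmult_le_compat_l; [lra|]. apply sqrt_le_1_alt. nra.
Qed.

Definition Fx (r rho d : R) : R := if Rlt_dec d rho then r * sqrt (1 - (d / r) * (d / r)) else 0.
Definition Phx (r rho s : R) : R := r * r * Phi1 (Rmin s rho / r).

Lemma Fx_hyp r rho : 0 < r -> 0 < rho < r -> Fhyp (Fx r rho) rho.
Proof.
  intros Hr Hrho. unfold Fhyp, Fx. split; [|split].
  - intros x y Hxy. destruct (Rlt_dec y rho); destruct (Rlt_dec x rho); try lra.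
    + apply Rmult_le_compat_l; [lra|]. apply sqrt_le_1_alt.
      assert (0 <= x / r <= y / r). { split. apply Rdiv_le_0_compat; lra. unfold Rdiv; apply Rmult_le_compat_r; [left; apply Rinv_0_lt_compat|]; lra. }
      nra.
    + apply Rmult_le_pos; [lra| apply sqrt_pos].
  - intros x Hx. destruct (Rlt_dec x rho); [apply Rmult_le_pos; [lra| apply sqrt_pos]|lra].
  - intros x Hx. destruct (Rlt_dec x rho); lra.
Qed.

Lemma Phx_inc r rho s h : 0 < r -> 0 < rho < r -> 0 <= s -> 0 <= h ->
  Phx r rho (s + h) - Phx r rho s <= h * Fx r rho s.
Proof.
  intros Hr Hrho Hs Hh. unfold Phx, Fx.
  destruct (Rlt_dec s rho).
  - rewrite (Rmin_left s rho) by lra.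
    set (m := Rmin (s + h) rho).
    assert (Hm : s <= m <= rho /\ m - s <= h) by (unfold m, Rmin; destruct (Rle_dec _ _); lra).
    assert (Hsr : 0 <= s / r <= m / r).
    { split. apply Rdiv_le_0_compat; lra. unfold Rdiv; apply Rmult_le_compat_r; [left; apply Rinv_0_lt_compat|]; lra. }
    assert (Hmr : m / r < 1). { apply (Rmult_lt_reg_r r); auto. unfold Rdiv; rewrite Rmult_assoc, Rinv_l by lra. lra. }
    pose proof (Phi1_inc (s / r) (m / r) Hsr Hmr) as H.
    replace (r * r * Phi1 (m / r) - r * r * Phi1 (s / r)) with (r * r * (Phi1 (m / r) - Phi1 (s / r))) by ring.
    eapply Rle_trans. { apply Rmult_le_compat_l. nra. exact H. }
    replace (r * r * ((m / r - s / r) * sqrt (1 - s / r * (s / r)))) with ((m - s) * (r * sqrt (1 - s / r * (s / r)))) by (field; lra).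
    apply Rmult_le_compat_r; [|lra]. apply Rmult_le_pos; [lra|apply sqrt_pos].
  - rewrite (Rmin_right s rho) by lra. rewrite (Rmin_right (s + h) rho) by lra. lra.
Qed.

Lemma Phx_const r rho s : rho <= s -> Phx r rho s = Phx r rho rho.
Proof. intros H. unfold Phx. rewrite Rmin_right, Rmin_left by lra. auto. Qed.

Lemma Phx_val r th : 0 < r -> 0 < th < PI / 2 ->
  r * r * th / 2 <= Phx r (r * sin th) (r * sin th) - Phx r (r * sin th) 0.
Proof.
  intros Hr Hth. unfold Phx. assert (Hs : 0 < sin th) by (apply sin_gt_0; lra).
  rewrite Rmin_left by lra. rewrite Rmin_left by nra.
  replace (r * sin th / r) with (sin th) by (field; lra). replace (0 / r) with 0 by (field; lra).
  unfold Phi1. rewrite asin_0, asin_sin by lra. rewrite Rmult_0_l, Rplus_0_r, Rmult_0_r.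
  assert (0 <= sin th * sqrt (1 - sin th * sin th)) by (apply Rmult_le_pos; [lra|apply sqrt_pos]).
  nra.
Qed.


Definition Fy (w d : R) : R := if Rlt_dec d w then 1 else 0.

Lemma Fy_lb w b N : 0 < w -> 2 * w <= 1 -> 0 <= b < 1 -> (0 < N)%nat ->
  2 * INR N * w - 2 <= sumN (fun l => Fy w (tdist1 (INR l / INR N) b)) N.
Proof.
  intros Hw Hw2 Hb HN.
  assert (HF : Fhyp (Fy w) w).
  { unfold Fhyp, Fy. split; [|split].
    - intros x y Hxy. destruct (Rlt_dec y w); destruct (Rlt_dec x w); lra.
    - intros x Hx. destruct (Rlt_dec x w); lra.
    - intros x Hx. destruct (Rlt_dec x w); lra. }
  pose proof (L1D (Fy w) (fun s => Rmin s w) w b N Hb Hw Hw2 HF) as H.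
  assert (H0 : Fy w 0 = 1) by (unfold Fy; destruct (Rlt_dec 0 w); lra).
  rewrite H0, (Rmin_left 0 w), (Rmin_right w w) in H by lra.
  replace (2 * INR N * w - 2) with (2 * INR N * (w - 0) - 2 * 1) by ring.
  apply H; auto.
  - intros s h Hs Hh. unfold Fy, Rmin. destruct (Rlt_dec s w); repeat destruct (Rle_dec _ _); lra.
  - intros s Hs. unfold Rmin. repeat destruct (Rle_dec _ _); lra.
Qed.

Definition dind (r : R) (p g : point) : R := if Rlt_dec (tdist g p) r then 1 else 0.

Definition grid (N j l : nat) : point := (INR j / INR N, INR l / INR N).

Definition Cnt (r : R) (p : point) (N : nat) : R :=
  sumN (fun j => sumN (fun l => dind r p (grid N j l)) N) N.

Lemma inner_lb r rho p N x : 0 < r -> r <= 1 / 4 -> 0 < rho < r -> in_torus p -> (0 < N)%nat ->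
  0 <= x < 1 ->
  2 * INR N * Fx r rho (tdist1 x (fst p)) - 2 <= sumN (fun l => dind r p (x, INR l / INR N)) N.
Proof.
  intros Hr Hr4 Hrho [Ha Hb] HN Hx.
  set (dl := tdist1 x (fst p)).
  assert (Hd0 : 0 <= dl) by (apply tdist1_nonneg; auto).
  assert (Hind : forall k, 0 <= dind r p k) by (intros; unfold dind; destruct (Rlt_dec _ _); lra).
  unfold Fx. destruct (Rlt_dec dl rho).
  2:{ assert (0 <= sumN (fun l => dind r p (x, INR l / INR N)) N) by (apply sumN_nonneg; auto). lra. }
  set (w := r * sqrt (1 - dl / r * (dl / r))).
  assert (Hdr : 0 <= dl / r < 1). { split. apply Rdiv_le_0_compat; lra.
    apply (Rmult_lt_reg_r r); auto. unfold Rdiv; rewrite Rmult_assoc, Rinv_l by lra. lra. }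
  assert (Hs1 : 0 < sqrt (1 - dl / r * (dl / r))) by (apply sqrt_lt_R0; nra).
  assert (Hs2 : sqrt (1 - dl / r * (dl / r)) <= 1).
  { apply Rle_trans with (sqrt 1); [apply sqrt_le_1_alt; nra | rewrite sqrt_1; lra]. }
  assert (Hw : 0 < w) by (unfold w; nra).
  assert (Hw2 : 2 * w <= 1) by (unfold w; nra).
  eapply Rle_trans. { apply (Fy_lb w (snd p) N Hw Hw2 Hb HN). }
  apply sumN_le. intros l Hl. unfold Fy, dind.
  destruct (Rlt_dec (tdist1 (INR l / INR N) (snd p)) w) as [He|]; [|destruct (Rlt_dec _ _); lra].
  destruct (Rlt_dec (tdist (x, INR l / INR N) p) r) as [|Hn]; [lra|exfalso; apply Hn].
  unfold tdist. simpl fst; simpl snd. fold dl.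
  set (e := tdist1 (INR l / INR N) (snd p)).
  assert (He0 : 0 <= e) by (apply tdist1_nonneg; auto; apply INR_div_range; auto).
  fold e in He.
  assert (Hww : w * w = r * r - dl * dl).
  { unfold w. replace (r * sqrt (1 - dl / r * (dl / r)) * (r * sqrt (1 - dl / r * (dl / r)))) with
      (r * r * (sqrt (1 - dl / r * (dl / r)) * sqrt (1 - dl / r * (dl / r)))) by ring.
    rewrite sqrt_sqrt by nra. field. lra. }
  rewrite <- (sqrt_square r) by lra.
  apply sqrt_lt_1_alt. split. nra. simpl. nra.
Qed.

Lemma Cnt_lb r p N th : 0 < r -> r <= 1 / 4 -> 0 < th < PI / 2 -> in_torus p -> (0 < N)%nat ->
  2 * INR N * INR N * r * r * th - 4 * INR N * r - 2 * INR N <= Cnt r p N.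
Proof.
  intros Hr Hr4 Hth Hp HN.
  assert (HNp : 0 < INR N) by (apply lt_0_INR; lia).
  set (rho := r * sin th).
  assert (Hsin : 0 < sin th < 1).
  { split. apply sin_gt_0; lra. rewrite <- sin_PI2. apply sin_increasing_1; lra. }
  assert (Hrho : 0 < rho < r) by (unfold rho; nra).
  destruct Hp as [Ha Hb].
  pose proof (L1D (Fx r rho) (Phx r rho) rho (fst p) N Ha (proj1 Hrho) ltac:(lra) (Fx_hyp r rho Hr Hrho)
     (fun s h => Phx_inc r rho s h Hr Hrho) (Phx_const r rho) HN) as H1.
  pose proof (Phx_val r th Hr Hth) as H2. fold rho in H2.
  assert (HF0 : Fx r rho 0 = r).
  { unfold Fx. destruct (Rlt_dec 0 rho); [|lra]. replace (1 - 0 / r * (0 / r)) with 1 by (field; lra).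
    rewrite sqrt_1; ring. }
  rewrite HF0 in H1.
  unfold Cnt.
  eapply Rle_trans with (sumN (fun j => 2 * INR N * Fx r rho (tdist1 (INR j / INR N) (fst p)) - 2) N).
  - rewrite (sumN_ext _ (fun j => 2 * INR N * Fx r rho (tdist1 (INR j / INR N) (fst p)) + (-2))) by (intros; ring).
    rewrite sumN_plus, sumN_scal, sumN_const.
    assert (2 * INR N * (INR N * (r * r * th / 2)) <= INR N * (2 * INR N * (Phx r rho rho - Phx r rho 0))).
    { replace (INR N * (2 * INR N * (Phx r rho rho - Phx r rho 0))) with (2 * INR N * (INR N * (Phx r rho rho - Phx r rho 0))) by ring.
      apply Rmult_le_compat_l; [lra|]. apply Rmult_le_compat_l; lra. }
    assert (0 <= 2 * INR N) by lra.
    assert (2 * INR N * (2 * INR N * (Phx r rho rho - Phx r rho 0) - 2 * r) <= 2 * INR N * sumN (fun j => Fx r rho (tdist1 (INR j / INR N) (fst p))) N)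
      by (apply Rmult_le_compat_l; lra).
    nra.
  - apply sumN_le. intros j Hj. apply inner_lb; auto. split; auto. apply INR_div_range; auto.
Qed.


Lemma tdist1_tri x y z : 0 <= x < 1 -> 0 <= y < 1 -> 0 <= z < 1 ->
  tdist1 x z <= tdist1 x y + tdist1 y z.
Proof. intros. unfold tdist1, Rmin. repeat destruct (Rle_dec _ _); unfold Rabs in *;
  repeat destruct (Rcase_abs _); lra. Qed.

Lemma tdist1_sym x y : tdist1 x y = tdist1 y x.
Proof. unfold tdist1. rewrite Rabs_minus_sym. auto. Qed.

Lemma tdist_sym p q : tdist p q = tdist q p.
Proof. unfold tdist. rewrite (tdist1_sym (fst p)), (tdist1_sym (snd p)). auto. Qed.

Lemma minkowski A B a1 a2 b1 b2 : 0 <= A -> 0 <= B -> 0 <= a1 -> 0 <= a2 -> 0 <= b1 -> 0 <= b2 ->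
  A <= a1 + b1 -> B <= a2 + b2 ->
  sqrt (A ^ 2 + B ^ 2) <= sqrt (a1 ^ 2 + a2 ^ 2) + sqrt (b1 ^ 2 + b2 ^ 2).
Proof.
  intros. set (X := a1 ^ 2 + a2 ^ 2). set (Y := b1 ^ 2 + b2 ^ 2).
  assert (HX : 0 <= X) by (unfold X; nra). assert (HY : 0 <= Y) by (unfold Y; nra).
  assert (sX := sqrt_pos X). assert (sY := sqrt_pos Y).
  assert (EX := sqrt_sqrt X HX). assert (EY := sqrt_sqrt Y HY).
  rewrite <- (sqrt_square (sqrt X + sqrt Y)) by lra.
  apply sqrt_le_1_alt.
  assert (CS : a1 * b1 + a2 * b2 <= sqrt X * sqrt Y).
  { rewrite <- sqrt_mult by auto. rewrite <- (sqrt_square (a1 * b1 + a2 * b2)) by nra.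
    apply sqrt_le_1_alt. unfold X, Y. assert (0 <= (a1 * b2 - a2 * b1) ^ 2) by (apply pow2_ge_0). nra. }
  unfold X, Y in *. nra.
Qed.

Lemma tdist_tri p g q : in_torus p -> in_torus g -> in_torus q -> tdist p q <= tdist p g + tdist g q.
Proof.
  intros [Hp1 Hp2] [Hg1 Hg2] [Hq1 Hq2]. unfold tdist.
  apply minkowski; try (apply tdist1_nonneg; auto); apply tdist1_tri; auto.
Qed.

Fixpoint PW (d : R) (P : list point) : Prop :=
  match P with nil => True | p :: P' => List.Forall (fun q => d < tdist p q) P' /\ PW d P' end.

Fixpoint sumL (f : point -> R) (P : list point) : R :=
  match P with nil => 0 | p :: P' => f p + sumL f P' end.

Lemma sumL_le f g P : (forall p, In p P -> f p <= g p) -> sumL f P <= sumL g P.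
Proof. induction P; simpl; intros H. lra. assert (f a <= g a) by auto. assert (sumL f P <= sumL g P) by auto. lra. Qed.

Lemma sumL_const c P : sumL (fun _ => c) P = INR (length P) * c.
Proof. induction P; simpl sumL. simpl; lra. rewrite IHP. simpl length. rewrite S_INR. lra. Qed.

Lemma sumL_sumN f P n : sumL (fun p => sumN (f p) n) P = sumN (fun k => sumL (fun p => f p k) P) n.
Proof. induction P; simpl. induction n; simpl; auto; rewrite <- IHn; lra.
  rewrite IHP. rewrite <- sumN_plus. auto. Qed.

Lemma dind_zero r p g P : in_torus p -> in_torus g -> tdist g p < r ->
  (forall q, In q P -> in_torus q /\ 2 * r < tdist p q) -> sumL (fun q => dind r q g) P = 0.
Proof.
  intros Hp Hg Hgp. induction P as [|q P IH]; simpl; intros H; auto.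
  rewrite IH by auto. destruct (H q (or_introl eq_refl)) as [Hq Hpq].
  unfold dind. destruct (Rlt_dec (tdist g q) r); [|lra].
  exfalso. pose proof (tdist_tri p g q Hp Hg Hq). rewrite (tdist_sym p g) in H0. lra.
Qed.

Lemma ind_sum_le1 r P g : 0 < r -> List.Forall in_torus P -> in_torus g -> PW (2 * r) P ->
  sumL (fun p => dind r p g) P <= 1.
Proof.
  intros Hr. induction P as [|p P IH]; simpl; intros HT Hg HPW. lra.
  inversion HT; subst. destruct HPW as [Hf HPW].
  unfold dind at 1. destruct (Rlt_dec (tdist g p) r).
  - rewrite dind_zero with (p := p); auto. lra.
    intros q Hq. rewrite List.Forall_forall in Hf, H2. auto.
  - assert (sumL (fun p0 => dind r p0 g) P <= 1) by auto. lra.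
Qed.

Lemma packing_N r P N th : 0 < r -> r <= 1 / 4 -> 0 < th < PI / 2 -> List.Forall in_torus P -> PW (2 * r) P ->
  (0 < N)%nat ->
  INR (length P) * (2 * INR N * INR N * r * r * th - 4 * INR N * r - 2 * INR N) <= INR N * INR N.
Proof.
  intros Hr Hr4 Hth HT HPW HN.
  rewrite <- sumL_const.
  apply Rle_trans with (sumL (fun p => Cnt r p N) P).
  { apply sumL_le. intros p Hp. apply Cnt_lb; auto. rewrite List.Forall_forall in HT; auto. }
  unfold Cnt. rewrite sumL_sumN.
  apply Rle_trans with (sumN (fun _ => INR N) N); [|rewrite sumN_const; lra].
  apply sumN_le. intros j Hj. rewrite sumL_sumN.
  apply Rle_trans with (sumN (fun _ => 1) N); [|rewrite sumN_const; lra].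
  apply sumN_le. intros l Hl. apply ind_sum_le1; auto.
  unfold grid, in_torus; simpl. split; apply INR_div_range; auto.
Qed.

Lemma packing r P : 0 < r -> r <= 1 / 4 -> List.Forall in_torus P -> PW (2 * r) P ->
  INR (length P) * (PI * r * r) <= 1.
Proof.
  intros Hr Hr4 HT HPW. set (k := INR (length P)).
  assert (Hk : 0 <= k) by apply pos_INR.
  destruct (Rle_dec (k * (PI * r * r)) 1) as [|Hc]; auto. exfalso.
  assert (Hpi := PI_RGT_0).
  set (eps := k * (PI * r * r) - 1).
  assert (Heps : 0 < eps) by (unfold eps; lra).
  assert (Hkr : 0 < k * r * r). { destruct (Rle_lt_dec k 0). assert (k = 0) by lra. unfold eps in Heps. rewrite H in Heps. lra. nra. }
  set (th := PI / 2 - eps / (4 * (k * r * r))).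
  assert (Hth : 0 < th < PI / 2).
  { unfold th. assert (0 < eps / (4 * (k * r * r))) by (apply Rdiv_lt_0_compat; lra).
    split; [|lra]. assert (eps / (4 * (k * r * r)) < PI / 2); [|lra].
    apply (Rmult_lt_reg_r (4 * (k * r * r))); [lra|]. unfold Rdiv. rewrite Rmult_assoc, Rinv_l by lra.
    unfold eps. nra. }
  assert (Hval : 2 * k * r * r * th = 1 + eps / 2).
  { unfold th. rewrite Rmult_minus_distr_l. replace (2 * k * r * r * (eps / (4 * (k * r * r)))) with (eps / 2) by (field; repeat split; nra). unfold eps; lra. }
  destruct (archimed (2 * k * (4 * r + 2) / eps)) as [Ha _].
  assert (Hz : (0 < up (2 * k * (4 * r + 2) / eps))%Z).
  { apply lt_IZR. assert (0 <= 2 * k * (4 * r + 2) / eps) by (apply Rdiv_le_0_compat; nra). lra. }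
  set (N := Z.to_nat (up (2 * k * (4 * r + 2) / eps))).
  assert (HN : INR N = IZR (up (2 * k * (4 * r + 2) / eps))) by (unfold N; rewrite INR_IZR_INZ, Z2Nat.id; auto; lia).
  assert (HN0 : (0 < N)%nat) by (unfold N; lia).
  pose proof (packing_N r P N th Hr Hr4 Hth HT HPW HN0) as H. fold k in H.
  rewrite <- HN in Ha.
  assert (HNp : 0 < INR N) by (apply lt_0_INR; lia).
  assert (H2 : k * (4 * r + 2) < INR N * (eps / 2)).
  { apply (Rmult_lt_reg_r (2 / eps)). apply Rdiv_lt_0_compat; lra.
    replace (INR N * (eps / 2) * (2 / eps)) with (INR N) by (field; lra).
    replace (k * (4 * r + 2) * (2 / eps)) with (2 * k * (4 * r + 2) / eps) by (field; lra). lra. }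
  assert (E : k * (2 * INR N * INR N * r * r * th - 4 * INR N * r - 2 * INR N) =
     INR N * (INR N * (2 * k * r * r * th) - k * (4 * r + 2))) by ring.
  rewrite E, Hval in H.
  assert (INR N * (1 + eps / 2) - k * (4 * r + 2) <= INR N).
  { apply (Rmult_le_reg_l (INR N)); auto; lra. }
  lra.
Qed.


Lemma degree0_far d V i j : degree d V i = 0%nat -> (j < length V)%nat -> i <> j ->
  d < tdist (vtx V i) (vtx V j).
Proof.
  intros H Hj Hij. unfold degree in H. apply length_zero_iff_nil in H.
  assert (Hn : ~ In j (filter (fun j0 => (negb (Nat.eqb i j0) && adjb d (vtx V i) (vtx V j0))%bool) (seq 0 (length V)))).
  { rewrite H. simpl. auto. }
  rewrite filter_In, in_seq in Hn.
  destruct (Rlt_le_dec d (tdist (vtx V i) (vtx V j))) as [|Hle]; auto. exfalso. apply Hn. split. lia.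
  apply Nat.eqb_neq in Hij. rewrite Hij. simpl. unfold adjb. destruct (Rle_dec _ _); auto; lra.
Qed.

Lemma PW_iso d V L : NoDup L -> (forall i, In i L -> (i < length V)%nat /\ degree d V i = 0%nat) ->
  PW d (map (vtx V) L).
Proof.
  induction L as [|i L IH]; simpl; intros HN H; auto.
  inversion HN; subst. split; [|apply IH; auto].
  rewrite List.Forall_forall. intros q Hq. apply in_map_iff in Hq. destruct Hq as [j [<- Hj]].
  apply degree0_far. apply H; auto. apply H; auto. intros <-. contradiction.
Qed.

Lemma torus_vtx V i : List.Forall in_torus V -> (i < length V)%nat -> in_torus (vtx V i).
Proof. intros H Hi. rewrite List.Forall_forall in H. apply H. unfold vtx. apply nth_In. auto. Qed.

Lemma step_facts d V V' : List.Forall in_torus V -> D3G3_step d S0 S0 V V' ->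
  List.Forall in_torus V' /\
  exists P, List.Forall in_torus P /\ PW d P /\ length V' = (2 * length P)%nat.
Proof.
  intros HT [news [Hn [Hl Hp]]].
  set (I := filter (fun i => S0 (degree d V i)) (seq 0 (length V))) in *.
  assert (HI : forall i, In i I -> (i < length V)%nat /\ degree d V i = 0%nat).
  { intros i Hi. unfold I in Hi. rewrite filter_In, in_seq in Hi. destruct Hi as [H1 H2].
    unfold S0 in H2. apply Nat.eqb_eq in H2. split; auto. lia. }
  assert (HP : List.Forall in_torus (map (vtx V) I)).
  { rewrite List.Forall_forall. intros q Hq. apply in_map_iff in Hq. destruct Hq as [j [<- Hj]].
    apply torus_vtx; auto. apply HI; auto. }
  split.
  - apply (Permutation_Forall (Permutation_sym Hp)). apply List.Forall_app. auto.
  - exists (map (vtx V) I). split; auto. split.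
    + apply PW_iso; auto. unfold I. apply NoDup_filter, seq_NoDup.
    + apply Permutation_length in Hp. rewrite Hp, List.length_app, List.length_map, Hl. lia.
Qed.

Lemma run_torus d G : D3G3_run d S0 S0 G -> forall t, List.Forall in_torus (G t).
Proof.
  intros [[_ H0] Hs] t. induction t; auto. apply (step_facts d (G t) (G (S t)) IHt (Hs t)).
Qed.

Theorem theorem5 :
  forall (d : R), 0 < d < 1 / 2 ->
  forall G : nat -> list point,
    D3G3_run d S0 S0 G ->
    (exists u : nat, (u < length (G 0%nat))%nat /\ degree d (G 0%nat) u = 0%nat) ->
    forall t : nat, (0 < t)%nat -> INR (length (G t)) <= 8 / (PI * d ^ 2).
Proof.
  intros d Hd G HR _ t Ht.
  destruct t as [|t]; [lia|].
  pose proof (run_torus d G HR t) as HT.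
  destruct (step_facts d (G t) (G (S t)) HT (proj2 HR t)) as [_ [P [HPT [HPW HL]]]].
  rewrite HL.
  assert (Hpk := packing (d / 2) P ltac:(lra) ltac:(lra) HPT ltac:(replace (2 * (d / 2)) with d by field; auto)).
  assert (Hpi := PI_RGT_0).
  assert (Hpd : 0 < PI * d ^ 2) by (apply Rmult_lt_0_compat; [lra|apply pow_lt; lra]).
  rewrite mult_INR. simpl (INR 2).
  apply (Rmult_le_reg_r (PI * d ^ 2)); auto.
  replace (8 / (PI * d ^ 2) * (PI * d ^ 2)) with 8 by (field; lra).
  replace ((1 + 1) * INR (length P) * (PI * d ^ 2)) with (8 * (INR (length P) * (PI * (d / 2) * (d / 2)))) by (field).
  lra.
Qed.
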